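(* Let $p>1$, $c\in(0,1]$, $X\subset\mathbb{R}^n$ nonempty convex compact, $F(\cdot,\xi)$ continuous and convex for each $\xi$, $f(x)=\mathbb{E}[F(x,\xi)]$, $h(x)=f(x)+c\,\mathbb{E}^{1/p}[(F(x,\xi)-f(x))_+^p]$, and let $x^*$ minimize $h$ over $X$. Define $\phi(x,y,z)=\frac c{z^{p-1}}\mathbb{E}[(F(x,\xi)-y)_+^p]+y+c(p-1)p^{-\frac p{p-1}}z$, $L(x,y,z,\lambda)=\phi(x,y,z)+\lambda(f(x)-y)$, $\Lambda=[0,1]$. Fix $\epsilon>0$ and let $(x_\epsilon^*,y_\epsilon^*,z_\epsilon^*,\lambda_\epsilon^* )$ be an optimal saddle point of $\min_{x\in X,y\in\mathbb{R},z\ge\epsilon}\max_{\lambda\in\Lambda}L(x,y,z,\lambda)$. Then $h(x_\epsilon^* )-h(x^* )\le cp^{-\frac1{p-1}}\epsilon$. Moreover, for any $\bar x\in X$, $\bar y\in\mathbb{R}$, $\bar z\ge\epsilon$ with $f(\bar x)-\bar y\le0$, \[ h(\bar x)-h(x^* )<[\phi(\bar x,\bar y,\bar z)-\phi(x_\epsilon^*,y_\epsilon^*,z_\epsilon^* )]+cp^{-\frac1{p-1}}\epsilon. \] In addition, for any $\bar x\in X$, $\bar y\in\mathbb{R}$, $\bar z\ge\epsilon$, $\bar\lambda\in\Lambda$, \[ h(\bar x)-h(x^* )<\Big[\max_{\lambda\in\Lambda}L(\bar x,\bar y,\bar z,\lambda)-\min_{x\in X,y\in\mathbb{R},z\ge\epsilon}L(x,y,z,\bar\lambda)\Big]+cp^{-\frac1{p-1}}\epsilon.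 \]
   Context: $(a)_+=\max\{a,0\}$; $F(x,\xi)$ has finite $p$-th moment for each $x\in X$. *)

(* Defs.v *)
From HB Require Import structures.
From mathcomp Require Import all_boot all_order all_algebra.
From mathcomp Require Import all_classical all_reals all_analysis.
Set Implicit Arguments. Unset Strict Implicit. Unset Printing Implicit Defensive.
Import Order.TTheory GRing.Theory Num.Theory.
Import numFieldNormedType.Exports.
Local Open Scope classical_set_scope.
Local Open Scope ring_scope.

(* Expectation of a real random variable g (real-valued; meaningful when g is
   integrable, which is ensured by the hypotheses of the theorem). *)
Definition Ex (R : realType) (d : measure_display) (T : measurableType d)
  (P : probability T R) (g : T -> R) : R :=
  fine (\int[P]_w (g w)%:E).

Definition pospart (R : realType) (a : R) : R := Num.max a 0.

Section Defs.
Context (R : realType) (d : measure_display) (T : measurableType d)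
  (P : probability T R) (d' : measure_display) (Xi : measurableType d')
  (xi : T -> Xi) (n : nat) (F : 'rV[R]_n -> Xi -> R) (p c : R).

Definition fobj (x : 'rV[R]_n) : R := Ex P (fun w => F x (xi w)).

Definition hobj (x : 'rV[R]_n) : R :=
  fobj x + c * (Ex P (fun w => pospart (F x (xi w) - fobj x) `^ p)) `^ (p^-1).

Definition phi (x : 'rV[R]_n) (y z : R) : R :=
  c / (z `^ (p - 1)) * Ex P (fun w => pospart (F x (xi w) - y) `^ p)
  + y + c * (p - 1) * p `^ (- (p / (p - 1))) * z.

Definition Lag (x : 'rV[R]_n) (y z lam : R) : R :=
  phi x y z + lam * (fobj x - y).

End Defs.

Definition Lam (R : realType) : set R := `[0, 1]%classic.

Definition convex_setR (R : realType) n (X : set 'rV[R]_n) : Prop :=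
  forall x y t, X x -> X y -> 0 <= t <= 1 -> X (t *: x + (1 - t) *: y).

Definition convex_funR (R : realType) n (g : 'rV[R]_n -> R) : Prop :=
  forall x y t, 0 <= t <= 1 -> g (t *: x + (1 - t) *: y) <= t * g x + (1 - t) * g y.

(* Main.v *)
Require Import Defs.
From HB Require Import structures.
From mathcomp Require Import all_boot all_order all_algebra.
From mathcomp Require Import all_classical all_reals all_analysis.
From mathcomp Require Import ring lra measurable_realfun hoelder.
Import Order.TTheory GRing.Theory Num.Theory.
Import numFieldNormedType.Exports.
Local Open Scope classical_set_scope.
Local Open Scope ring_scope.

Section Scal.
Context (R : realType).
Implicit Types (x y z t u p : R).

Lemma powRV x r : 0 < x -> (x^-1) `^ r = (x `^ r)^-1.
Proof.
move=> x0; rewrite /powR invr_eq0 gt_eqF//.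
by rewrite lnV ?posrE// mulrN expRN.
Qed.

Lemma powRK x r : 0 <= x -> r != 0 -> (x `^ r) `^ (r^-1) = x.
Proof. by move=> x0 r0; rewrite -powRrM mulfV// powRr1. Qed.

Lemma powRKV x r : 0 <= x -> r != 0 -> (x `^ (r^-1)) `^ r = x.
Proof. by move=> x0 r0; rewrite -powRrM mulVf// powRr1. Qed.

Variable p : R.
Hypothesis p1 : 1 < p.
Let p0 : 0 < p. Proof. by rewrite (lt_trans _ p1). Qed.
Let pm10 : 0 < p - 1. Proof. by rewrite subr_gt0. Qed.

Definition aa := p `^ (- (p - 1)^-1).

Lemma aa_gt0 : 0 < aa. Proof. by rewrite powR_gt0. Qed.

Lemma aa_q : p `^ (- (p / (p - 1))) = aa / p.
Proof.
have -> : - (p / (p - 1)) = - (p - 1)^-1 + (-1).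
  by field; rewrite gt_eqF.
rewrite powRD; last by apply/implyP => _; rewrite gt_eqF.
by rewrite powR_inv1 // ltW.
Qed.

Lemma aaV : (aa^-1) `^ (p - 1) = p.
Proof.
rewrite powRV ?aa_gt0// /aa -powRrM mulNr mulVf ?gt_eqF// powR_inv1 ?invrK//.
all: try done; exact: ltW.
Qed.

Lemma young1 t : 0 <= t -> t <= t `^ p + (p - 1) * aa / p.
Proof.
move=> t0.
pose q := p / (p - 1).
have q0 : 0 < q by rewrite divr_gt0.
have pq : p^-1 + q^-1 = 1 by rewrite /q invf_div; field; rewrite gt_eqF.
pose X := p `^ (p^-1).
have X0 : 0 < X by rewrite powR_gt0.
have := @conjugate_powR R (t * X) (X^-1) p q (mulr_ge0 t0 (ltW X0)) (ltW (eqbRL (invr_gt0 X) X0)) p0 q0 pq.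
rewrite mulrK ?unitfE ?gt_eqF// => /le_trans; apply.
rewrite powRM ?(ltW X0)// /X powRKV ?(ltW p0) ?gt_eqF// mulfK ?gt_eqF//.
rewrite lerD2l powRV// -powRrM.
have -> : p^-1 * q = (p - 1)^-1 by rewrite /q mulrA mulVf ?gt_eqF// mul1r.
rewrite -powRN -/aa /q invf_div.
by rewrite mulrCA mulrA.
Qed.


Definition KK := (p - 1) * aa / p.

Lemma KK_gt0 : 0 < KK.
Proof. by rewrite /KK divr_gt0// mulr_gt0// aa_gt0. Qed.

Lemma KK_lt : KK < aa.
Proof.
rewrite /KK ltr_pdivrMr// mulrC ltr_pM2l ?aa_gt0//.
by rewrite ltrBlDr ltrDl.
Qed.

Lemma young2 G z : 0 <= G -> 0 < z ->
  G `^ (p^-1) <= G / z `^ (p - 1) + KK * z.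
Proof.
move=> G0 z0.
set u := G `^ (p^-1).
have u0 : 0 <= u by rewrite powR_ge0.
have := @young1 (u / z) (divr_ge0 u0 (ltW z0)).
rewrite -/KK => /(ler_wpM2r (ltW z0)); rewrite divfK ?gt_eqF// => /le_trans; apply.
rewrite mulrDl lerD2r powRM ?invr_ge0 ?(ltW z0)// powRV// /u powRKV ?gt_eqF//.
rewrite -(mulr_powRB1 (ltW z0) p0) invfM.
by rewrite -mulrA mulrAC mulVf ?gt_eqF// mul1r.
Qed.

Lemma young3 G e : 0 <= G -> 0 < e ->
  exists z, e <= z /\ G / z `^ (p - 1) + KK * z <= G `^ (p^-1) + KK * e.
Proof.
move=> G0 e0.
have [->|Gn] := eqVneq G 0.
  by exists e; split => //; rewrite mul0r add0r powR0 ?add0r// invr_neq0// gt_eqF.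
have Gpos : 0 < G by rewrite lt_neqAle eq_sym Gn G0.
set u := G `^ (p^-1).
have u0 : 0 < u by rewrite powR_gt0.
set w := u / aa.
have w0 : 0 < w by rewrite divr_gt0// aa_gt0.
exists (w + e); split; first by rewrite lerDr ltW.
rewrite mulrDr addrA lerD2r.
have Gu : G = u * u `^ (p - 1).
  by rewrite mulr_powRB1 ?(ltW u0)// /u powRKV ?gt_eqF.
have hw : w `^ (p - 1) = u `^ (p - 1) * p.
  by rewrite /w powRM ?(ltW u0) ?invr_ge0 ?(ltW aa_gt0)// aaV.
apply: (@le_trans _ _ (G / w `^ (p - 1) + KK * w)).
  rewrite lerD2r ler_pM2l// lef_pV2 ?posrE ?powR_gt0 ?addr_gt0//.
  apply: ge0_ler_powR; first exact: ltW.
  - by rewrite nnegrE ltW.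
  - by rewrite nnegrE addr_ge0// ltW.
  - by rewrite lerDl ltW.
have U0 : 0 < u `^ (p - 1) by rewrite powR_gt0.
have -> : G / w `^ (p - 1) = u / p.
  by rewrite hw Gu invfM mulrA mulfK ?gt_eqF.
rewrite /KK /w le_eqVlt; apply/orP; left; apply/eqP.
field; apply/andP; split; rewrite gt_eqF//; exact: aa_gt0.
Qed.

End Scal.

Lemma sum_powR (R : realType) (p a b : R) : 0 <= p -> 0 <= a -> 0 <= b ->
  (a + b) `^ p <= 2 `^ p * (a `^ p + b `^ p).
Proof.
move=> p0 a0 b0.
wlog ab : a b a0 b0 / a <= b.
  move=> H; have [|ba] := leP a b; first exact: H.
  by rewrite addrC [a `^ p + _]addrC; apply: H => //; exact: ltW.
apply: (@le_trans _ _ ((2 * b) `^ p)).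
  apply: ge0_ler_powR => //; rewrite ?nnegrE ?addr_ge0 ?mulr_ge0//.
  by rewrite mulr2n mulrDl mul1r lerD2r.
rewrite powRM// ler_pM2l ?powR_gt0// lerDr powR_ge0//.
Qed.

Section Meas.
Context (R : realType) (d : measure_display) (T : measurableType d)
  (P : probability T R) (p : R) (g : T -> R).
Hypothesis p1 : 1 < p.
Hypothesis mg : measurable_fun setT g.
Hypothesis ig : P.-integrable setT (fun w => ((`|g w|) `^ p)%:E).
Let p0 : 0 < p. Proof. by rewrite (lt_trans _ p1). Qed.

Definition Uf y w := pospart (g w - y).

Lemma Uf_ge0 y w : 0 <= Uf y w.
Proof. by rewrite /Uf /pospart le_max lexx orbT. Qed.

Lemma mUf y : measurable_fun setT (Uf y).
Proof.
rewrite /Uf /pospart.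
apply: (measurable_realfun.measurable_maxr (f := fun w => g w - y) (g := fun=> 0)).
  by apply: measurable_realfun.measurable_funB => //; exact: measurable_cst.
exact: measurable_cst.
Qed.

Lemma mUp y : measurable_fun setT (fun w => (Uf y w) `^ p).
Proof. exact: (measurableT_comp (measurable_powR p) (mUf y)). Qed.

Lemma iUp y : P.-integrable setT (fun w => ((Uf y w) `^ p)%:E).
Proof.
pose h := fun w => (2 `^ p * (`|g w| `^ p + `|y| `^ p))%R.
have ih : P.-integrable setT (EFin \o h).
  have i1 : P.-integrable setT (fun w => ((`|g w| `^ p)%:E + (EFin \o cst (`|y| `^ p)%R) w)%E).
    apply: (integrableD measurableT ig).
    exact: finite_measure_integrable_cst.
  have := integrableZl measurableT (2 `^ p) i1.
  by apply: eq_integrable => // w _.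
apply: (le_integrable measurableT _ _ ih).
- by apply/measurable_EFinP; exact: mUp.
- move=> w _ /=; rewrite lee_fin /h.
  rewrite ger0_norm ?powR_ge0// ger0_norm ?mulr_ge0 ?addr_ge0 ?powR_ge0//.
  apply: (@le_trans _ _ ((`|g w| + `|y|) `^ p)).
    apply: ge0_ler_powR; first exact: ltW.
    - by rewrite nnegrE Uf_ge0.
    - by rewrite nnegrE addr_ge0.
    rewrite /Uf /pospart ge_max addr_ge0// andbT.
    by rewrite (le_trans (ler_norm _))// (le_trans (ler_normD _ _))// normrN.
  by apply: sum_powR => //; exact: ltW.
Qed.

Definition GG y := Ex P (fun w => (Uf y w) `^ p).

Lemma GG_E y : (GG y)%:E = (\int[P]_w ((Uf y w) `^ p)%:E)%E.
Proof. by rewrite /GG /Ex fineK// (integrable_fin_num measurableT (iUp y)). Qed.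

Lemma GG_ge0 y : 0 <= GG y.
Proof.
by rewrite -lee_fin GG_E; apply: integral_ge0 => w _; rewrite lee_fin powR_ge0.
Qed.

Lemma GG_mono y1 y2 : y1 <= y2 -> GG y2 <= GG y1.
Proof.
move=> y12; rewrite -lee_fin !GG_E; apply: ge0_le_integral => //.
- by move=> w _; rewrite lee_fin powR_ge0.
- by apply/measurable_EFinP; exact: mUp.
- by apply/measurable_EFinP; exact: mUp.
move=> w _; rewrite lee_fin; apply: ge0_ler_powR; first exact: ltW.
- by rewrite nnegrE Uf_ge0.
- by rewrite nnegrE Uf_ge0.
by rewrite /Uf /pospart le_max2// lerB.
Qed.


Definition NN (f : T -> R) := Lnorm P p%:E (EFin \o f).

Lemma NN_E (f : T -> R) : (forall w, 0 <= f w) ->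
  NN f = ((\int[P]_w ((f w) `^ p)%:E) `^ p^-1)%E.
Proof.
move=> f0; rewrite /NN unlock /=; congr (_ `^ _)%E; apply: eq_integral => w _.
by rewrite /= ger0_norm.
Qed.

Lemma NN_Uf y : NN (Uf y) = ((GG y) `^ (p^-1))%:E.
Proof. rewrite NN_E; last exact: Uf_ge0.
by rewrite -GG_E poweR_EFin. Qed.

Lemma NN_le (f1 f2 : T -> R) : measurable_fun setT f1 -> measurable_fun setT f2 ->
  (forall w, 0 <= f1 w) -> (forall w, f1 w <= f2 w) -> (NN f1 <= NN f2)%E.
Proof.
move=> m1 m2 f10 f12.
have f20 w : 0 <= f2 w by exact: le_trans (f10 w) (f12 w).
rewrite !NN_E//; apply: gt0_ler_poweR; first by rewrite invr_ge0 ltW.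
- rewrite in_itv /= leey andbT; apply: integral_ge0 => w _.
  by rewrite lee_fin powR_ge0.
- rewrite in_itv /= leey andbT; apply: integral_ge0 => w _.
  by rewrite lee_fin powR_ge0.
apply: ge0_le_integral => //.
- by move=> w _; rewrite lee_fin powR_ge0.
- by apply/measurable_EFinP; exact: (measurableT_comp (measurable_powR p) m1).
- by apply/measurable_EFinP; exact: (measurableT_comp (measurable_powR p) m2).
move=> w _; rewrite lee_fin; apply: ge0_ler_powR; first exact: ltW.
- by rewrite nnegrE.
- by rewrite nnegrE.
exact: f12.
Qed.

Lemma NN_cst k : 0 <= k -> NN (cst k) = k%:E.
Proof.
move=> k0; rewrite NN_E// (@integral_cst _ _ _ P setT measurableT ((k `^ p)%:E)).
transitivity ((((k `^ p)%:E * 1) `^ p^-1)%E).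
  by congr (_ `^ _)%E; congr (_ * _)%E; exact: probability_setT.
rewrite mule1 poweR_EFin.
by rewrite -powRrM mulfV ?gt_eqF// powRr1.
Qed.

Lemma GG_lip y1 y2 : y1 <= y2 ->
  (GG y1) `^ (p^-1) <= (GG y2) `^ (p^-1) + (y2 - y1).
Proof.
move=> y12; rewrite -lee_fin -NN_Uf EFinD -NN_Uf -(NN_cst (y2 - y1)); last by rewrite subr_ge0.
apply: (le_trans (@NN_le (Uf y1) (Uf y2 \+ cst (y2 - y1)) (mUf y1) _ (Uf_ge0 y1) _)).
- by apply: measurable_funD; [exact: mUf | exact: measurable_cst].
- move=> w; rewrite /Uf /pospart /= ge_max; apply/andP; split.
    by rewrite -[g w - y1](subrKA y2) lerD2r le_max lexx.
  by rewrite addr_ge0// ?le_max ?lexx ?orbT// subr_ge0.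
apply: minkowski_EFin; [exact: mUf | exact: measurable_cst | exact: ltW].
Qed.


Variable c : R.
Hypothesis c0 : 0 < c.
Hypothesis c1 : c <= 1.

Lemma keyH f y z : 0 < z ->
  (f <= y -> f + c * (GG f) `^ p^-1 <=
     c / z `^ (p - 1) * GG y + y + c * (p - 1) * p `^ (- (p / (p - 1))) * z) /\
  (y <= f -> f + c * (GG f) `^ p^-1 <=
     c / z `^ (p - 1) * GG y + y + c * (p - 1) * p `^ (- (p / (p - 1))) * z + (f - y)).
Proof.
move=> z0.
have Y := @young2 _ _ p1 _ _ (GG_ge0 y) z0.
rewrite aa_q//.
have -> : c / z `^ (p - 1) * GG y + y + c * (p - 1) * (@aa _ p / p) * z
   = y + c * (GG y / z `^ (p - 1) + @KK _ p * z) by rewrite /KK; ring.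
move: Y; move: (GG y / z `^ (p - 1) + @KK _ p * z) => W Y.
have cW : c * (GG y) `^ p^-1 <= c * W by rewrite ler_pM2l.
split => fy.
- have L := GG_lip f y fy.
  have H1 : c * (GG f) `^ p^-1 <= c * (GG y) `^ p^-1 + c * (y - f).
    by rewrite -mulrDr ler_pM2l.
  have H2 : c * (y - f) <= y - f by rewrite ler_piMl// subr_ge0.
  have H3 : c * (GG f) `^ p^-1 <= c * W + (y - f).
    exact: le_trans H1 (lerD cW H2).
  have -> : y + c * W = f + (c * W + (y - f)) by ring.
  by rewrite lerD2l.
- have M : (GG f) `^ p^-1 <= (GG y) `^ p^-1.
    apply: ge0_ler_powR; first by rewrite invr_ge0 ltW.
    - by rewrite nnegrE GG_ge0.
    - by rewrite nnegrE GG_ge0.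
    exact: GG_mono.
  have H1 : c * (GG f) `^ p^-1 <= c * (GG y) `^ p^-1 by rewrite ler_pM2l.
  have H3 : c * (GG f) `^ p^-1 <= c * W by exact: le_trans H1 cW.
  have -> : y + c * W + (f - y) = f + c * W by ring.
  by rewrite lerD2l.
Qed.

Lemma keyU f e : 0 < e -> exists z, e <= z /\
  c / z `^ (p - 1) * GG f + f + c * (p - 1) * p `^ (- (p / (p - 1))) * z
  <= f + c * (GG f) `^ p^-1 + c * @KK _ p * e.
Proof.
move=> e0; have [z [ez Hz]] := @young3 _ _ p1 _ _ (GG_ge0 f) e0.
exists z; split => //.
rewrite aa_q//.
have -> : c / z `^ (p - 1) * GG f + f + c * (p - 1) * (@aa _ p / p) * z
     = f + c * (GG f / z `^ (p - 1) + @KK _ p * z) by rewrite /KK; ring.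
rewrite -addrA -mulrA -mulrDr lerD2l ler_pM2l//.
Qed.

End Meas.


Lemma arith1 (R : realType) (a L b k dl : R) :
  a <= L -> L <= b + k -> k < dl -> a - b <= dl.
Proof. move=> *; lra. Qed.

Lemma arith2 (R : realType) (a pb pe L b k dl : R) :
  a <= pb -> pe <= L -> L <= b + k -> k < dl -> a - b < pb - pe + dl.
Proof. move=> *; lra. Qed.

Lemma arith3 (R : realType) (a b k dl : R) (S I : \bar R) :
  (a%:E <= S)%E -> (I <= (b + k)%:E)%E -> k < dl ->
  ((a - b)%:E < S - I + dl%:E)%E.
Proof.
move=> aS Ib kd.
apply: (@lt_le_trans _ _ (a%:E - (b + k)%:E + dl%:E)%E).
  by rewrite -EFinB -EFinD lte_fin; lra.
by rewrite leeD2r// leeB.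
Qed.

Lemma Lam0 (R : realType) : @Lam R 0.
Proof. by rewrite /Lam /= in_itv /= lexx ler01. Qed.
Lemma Lam1 (R : realType) : @Lam R 1.
Proof. by rewrite /Lam /= in_itv /= lexx ler01. Qed.

Theorem lemma14 (R : realType) (d : measure_display) (T : measurableType d)
  (P : probability T R) (d' : measure_display) (Xi : measurableType d')
  (xi : T -> Xi) (n : nat) (F : 'rV[R]_n -> Xi -> R) (p c : R)
  (X : set 'rV[R]_n) (eps : R)
  (xs : 'rV[R]_n) (xe : 'rV[R]_n) (ye ze le : R) :
  1 < p -> 0 < c -> c <= 1 ->
  X !=set0 -> convex_setR X -> compact X ->
  (forall s : Xi, continuous (fun x => F x s)) ->
  (forall s : Xi, convex_funR (fun x => F x s)) ->
  (forall x, measurable_fun setT (fun w => F x (xi w))) ->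
  (forall x, P.-integrable setT (fun w => ((`|F x (xi w)|) `^ p)%:E)) ->
  (* x* minimizes h over X *)
  X xs -> (forall x, X x -> hobj P xi F p c xs <= hobj P xi F p c x) ->
  0 < eps ->
  (* (xe,ye,ze,le) is a saddle point of min_{x in X, y, z >= eps} max_{lam in Lam} L *)
  X xe -> eps <= ze -> @Lam R le ->
  (forall lam, @Lam R lam ->
     Lag P xi F p c xe ye ze lam <= Lag P xi F p c xe ye ze le) ->
  (forall (x : 'rV[R]_n) (y z : R), X x -> eps <= z ->
     Lag P xi F p c xe ye ze le <= Lag P xi F p c x y z le) ->
  let delta := c * p `^ (- (p - 1)^-1) * eps in
  [/\ hobj P xi F p c xe - hobj P xi F p c xs <= delta,
      (forall (xb : 'rV[R]_n) (yb zb : R), X xb -> eps <= zb -> fobj P xi F xb - yb <= 0 ->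
         hobj P xi F p c xb - hobj P xi F p c xs <
           (phi P xi F p c xb yb zb - phi P xi F p c xe ye ze) + delta) &
      (forall (xb : 'rV[R]_n) (yb zb lb : R), X xb -> eps <= zb -> @Lam R lb ->
         (((hobj P xi F p c xb - hobj P xi F p c xs)%:E <
           (ereal_sup [set (Lag P xi F p c xb yb zb lam)%:E | lam in @Lam R]
            - ereal_inf [set r : \bar R | exists (x : 'rV[R]_n) (y z : R), [/\ X x, (eps <= z)%R &
                              r = (Lag P xi F p c x y z lb)%:E]]
            + delta%:E))%E))].
Proof.
move=> p1 c0 c1 _ _ _ _ _ mF iF Xs hmin e0 Xe eze Lle hmax hmin2 delta.
pose gx (x : 'rV[R]_n) := fun w => F x (xi w).
have HK x y z : 0 < z ->
  (fobj P xi F x <= y -> hobj P xi F p c x <= phi P xi F p c x y z) /\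
  (y <= fobj P xi F x -> hobj P xi F p c x <= phi P xi F p c x y z + (fobj P xi F x - y)).
  move=> z0; exact: (@keyH R d T P p (gx x) p1 (mF x) (iF x) c c0 c1 (fobj P xi F x) y z z0).
have HL x y z : 0 < z -> exists2 lam, @Lam R lam & hobj P xi F p c x <= Lag P xi F p c x y z lam.
  move=> z0; have [H1 H2] := HK x y z z0.
  have [fy|yf] := leP (fobj P xi F x) y.
    by exists 0; [exact: Lam0 | rewrite /Lag mul0r addr0; exact: H1].
  by exists 1; [exact: Lam1 | rewrite /Lag mul1r; apply: H2; exact: ltW].
pose KE := c * KK R p * eps.
have KEd : KE < delta.
  by rewrite /KE /delta ltr_pM2r// ltr_pM2l// KK_lt.
have [z0 [ez0 Hz0]] := @keyU R d T P p (gx xs) p1 (mF xs) (iF xs) c c0 (fobj P xi F xs) eps e0.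
have Hxs' lam : Lag P xi F p c xs (fobj P xi F xs) z0 lam <= hobj P xi F p c xs + KE.
  rewrite /Lag subrr mulr0 addr0 /KE; exact: Hz0.
have UB : Lag P xi F p c xe ye ze le <= hobj P xi F p c xs + KE.
  exact: le_trans (hmin2 _ _ _ Xs ez0) (Hxs' le).
have ze0 : 0 < ze by exact: lt_le_trans e0 eze.
have phie : phi P xi F p c xe ye ze <= Lag P xi F p c xe ye ze le.
  by have := hmax 0 (Lam0 R); rewrite /Lag mul0r addr0.
split.
- have [lam Llam Hl] := HL xe ye ze ze0.
  exact: arith1 Hl (le_trans (hmax _ Llam) UB) KEd.
- move=> xb yb zb Xb ezb fyb.
  have zb0 : 0 < zb by exact: lt_le_trans e0 ezb.
  have [H1 _] := HK xb yb zb zb0.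
  apply: arith2 (H1 _) phie UB KEd; by rewrite -subr_le0.
- move=> xb yb zb lb Xb ezb Llb.
  have zb0 : 0 < zb by exact: lt_le_trans e0 ezb.
  have [lam Llam Hl] := HL xb yb zb zb0.
  apply: arith3 _ _ KEd.
    apply: (@le_trans _ _ (Lag P xi F p c xb yb zb lam)%:E); first by rewrite lee_fin.
    by apply: ereal_sup_ubound; exists lam.
  apply: (@le_trans _ _ (Lag P xi F p c xs (fobj P xi F xs) z0 lb)%:E).
    by apply: ereal_inf_lbound; exists xs, (fobj P xi F xs), z0; split.
  by rewrite lee_fin.
Qed.
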